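(* Let $n\ge 2$ and $m\ge 2$ be integers. Let $M_1=(\mu_{ij})$ be the $n\times n$ $0/1$ matrix with $\mu_{1,n-1}=\mu_{1,n}=1$, $\mu_{i,i-1}=1$ for $2\le i\le n$, and all other entries $0$, and let $\mathbb{A}_0$ be the order $m$, dimension $n$ tensor with $(\mathbb{A}_0)_{ij\ldots j}=\mu_{ij}$ for all $i,j\in[n]$ and $(\mathbb{A}_0)_{ii_2\ldots i_m}=0$ whenever $i_2,\ldots,i_m$ are not all equal. Then: (i) if $k$ is an integer with $1\le k\le n^2-3n+2$ and $k=(n-1)q+r$ with $q\ge0$, $1\le r\le n-1$, then $S_k(\mathbb{A}_0,n-1)=\{r-q-1,\ldots,r-1,r\}\pmod n$ and $|S_k(\mathbb{A}_0,n-1)|=q+2$; (ii) for every positive integer $t$ and every $j\in\{1,\ldots,n-2\}$, $S_{t+(n-1-j)}(\mathbb{A}_0,j)=S_t(\mathbb{A}_0,n-1)$, and also $S_{t+n-1}(\mathbb{A}_0,n)=S_t(\mathbb{A}_0,n-1)$.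
   Context: For an integer $a$, $|a|_n$ denotes the least positive integer congruent to $a$ modulo $n$, and $\{a_1,\ldots,a_s\}\pmod n$ means $\{|a_1|_n,\ldots,|a_s|_n\}$. General product of tensors of dimension $n$: for $\mathbb{A}$ of order $m\ge2$ and $\mathbb{B}$ of order $k\ge1$, $(\mathbb{A}\mathbb{B})_{i\alpha_1\ldots\alpha_{m-1}}=\sum_{i_2,\ldots,i_m=1}^n a_{ii_2\ldots i_m}b_{i_2\alpha_1}\cdots b_{i_m\alpha_{m-1}}$ ($\alpha_l\in[n]^{k-1}$), a tensor of order $(m-1)(k-1)+1$; it is associative and $\mathbb{A}^k$ is the $k$-fold power. The majorization matrix of a tensor $\mathbb{C}$ is $(M(\mathbb{C}))_{ij}=c_{ij\ldots j}$. For a nonnegative tensor $\mathbb{A}$, $j\in[n]$ and $k\ge1$, $S_k(\mathbb{A},j)=\{u\in[n]\mid (M(\mathbb{A}^k))_{uj}>0\}$. *)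

(* Defs.v *)
From mathcomp Require Import all_boot all_order all_algebra.
Set Implicit Arguments. Unset Strict Implicit. Unset Printing Implicit Defensive.
Import Order.TTheory GRing.Theory Num.Theory.
Local Open Scope ring_scope.

(* Index i : 'I_n stands for the paper's label i.+1 in [n] = {1,...,n}.
   A tensor of order p is only ever evaluated on sequences of length p. *)
Definition tensor (R : Type) (n : nat) := seq 'I_n -> R.

(* General product of A (order m) and B (order k):
   (AB)_{i alpha_1 ... alpha_{m-1}} =
     sum_{i_2..i_m} a_{i i_2 .. i_m} b_{i_2 alpha_1} ... b_{i_m alpha_{m-1}},
   alpha_l being the l-th block of length k-1 of the remaining indices. *)
Definition tprod (R : numDomainType) (n m k : nat) (A B : tensor R n) : tensor R n :=
  fun s => match s with
  | [::] => 0
  | i :: rest =>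
      \sum_(t : (m.-1).-tuple 'I_n)
        A (i :: (t : seq 'I_n)) *
        \prod_(l < m.-1) B (tnth t l :: take k.-1 (drop (l * k.-1) rest))
  end.

(* k-fold power: A^1 = A, A^(k+1) = A (A^k); A^k has order (m-1)^k + 1. *)
Fixpoint tpow (R : numDomainType) (n m : nat) (A : tensor R n) (k : nat) : tensor R n :=
  match k with
  | k'.+1 => if k' is 0 then A
             else tprod m ((m.-1) ^ k').+1 A (tpow m A k')
  | 0 => A
  end.

Definition majmx (R : numDomainType) (n p : nat) (C : tensor R n) (i j : 'I_n) : R :=
  C (i :: nseq p.-1 j).

Definition Sk (R : numDomainType) (n m : nat) (A : tensor R n) (k : nat) (j : 'I_n)
  : {set 'I_n} :=
  [set u : 'I_n | 0 < majmx ((m.-1) ^ k).+1 (tpow m A k) u j].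

(* |a|_n : least positive integer congruent to a modulo n (n > 0) *)
Definition modpos (n : nat) (a : int) : nat := (`|((a - 1) %% n)%Z|%N).+1.

Definition mu1 (n : nat) (i j : 'I_n) : bool :=
  ((i.+1 == 1)%N && ((j.+1 == n.-1)%N || (j.+1 == n)%N))
  || ((2 <= i.+1)%N && (j.+1 == i.+1 - 1)%N).

Definition A0 (R : numDomainType) (n m : nat) : tensor R n :=
  fun s => match s with
  | i :: j :: rest =>
      if (size s == m) && all (fun x => x == j) rest then (mu1 i j)%:R else 0
  | _ => 0
  end.

(* Main.v *)
Require Import Defs.
From mathcomp Require Import all_boot all_order all_algebra.
From mathcomp Require Import zify.
Import Order.TTheory GRing.Theory Num.Theory.

Fixpoint W {n : nat} (k : nat) (u v : 'I_n) : bool :=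
  if k is k'.+1 then [exists w, mu1 u w && W k' w v] else u == v.

Lemma mu1E n' (u w : 'I_n'.+2) : mu1 u w =
  ((u == 0 :> nat) && ((w == n' :> nat) || (w == n'.+1 :> nat))) || ((0 < u) && (w.+1 == u)).
Proof. rewrite /mu1 /=. lia. Qed.

Definition inT n (q r x : nat) : bool :=
  ((x < r) && (r <= x + q + 2)) || ((x + 1 <= r + n) && (r + n <= x + q + 2)).

Section Comb.
Variable n' : nat.
Local Notation N := n'.+2.

Lemma Wfirst k (u v : 'I_N) : W k.+1 u v =
  if 0 < u then W k (inord (u - 1)) v else W k (inord n') v || W k (inord n'.+1) v.
Proof.
have Hu0 := ltn_ord u; rewrite /=; apply/existsP/idP.
- move=> [w /andP [Hm HW]]; rewrite mu1E in Hm.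
  case: ifP => Hu.
    have -> : inord (u - 1) = w by apply/val_inj; move: Hm; case: w {HW} => w Hw /=; rewrite inordK; lia.
    done.
  have [E|E] : w = inord n' \/ w = inord n'.+1.
    case/orP: Hm; last lia.
    move=> /andP [_ /orP [] /eqP H]; [left|right]; apply/val_inj; move: H; case: w {HW} => w Hw /=; rewrite inordK; lia.
  + by rewrite -E HW.
  + by rewrite -E HW orbT.
- case: ifP => Hu.
    move=> HW; exists (inord (u - 1)); rewrite HW andbT mu1E inordK; lia.
  case/orP => HW; [exists (inord n')|exists (inord n'.+1)]; rewrite HW andbT mu1E inordK; lia.
Qed.

Definition jn2 : 'I_N := inord n'.
Definition Wn k x := W k (inord x : 'I_N) jn2.

Lemma Wstep k x : x < N -> Wn k.+1 x = if 0 < x then Wn k (x-1) else Wn k n' || Wn k n'.+1.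
Proof. move=> Hx; rewrite /Wn Wfirst inordK //; case: ifP => //; done. Qed.

Lemma Wn0 x : x < N -> Wn 0 x = (x == n').
Proof.
move=> Hx; rewrite /Wn /= /jn2; apply/eqP/eqP => [H|->] //.
by have := f_equal val H; rewrite /= !inordK.
Qed.

Lemma claim_r q : q + 2 < N ->
  (forall x, x < N -> Wn ((N-1)*q + 1) x = inT N q 1 x) ->
  forall r, 1 <= r <= N-1 -> forall x, x < N -> Wn ((N-1)*q + r) x = inT N q r x.
Proof.
move=> Hq H1; elim=> [//|r IHr] /andP[_ Hr2].
case: r IHr Hr2 => [|r] IHr Hr2; first exact: H1.
move=> x Hx; rewrite addnS Wstep //.
have IH := IHr (ltac:(lia)).
case: ifP => Hx0; rewrite !IH; rewrite /inT; lia.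
Qed.

Lemma claim q : q + 2 < N -> forall r, 1 <= r <= N-1 ->
  forall x, x < N -> Wn ((N-1)*q + r) x = inT N q r x.
Proof.
elim: q => [|q IHq] Hq; apply: claim_r => // x Hx.
  rewrite muln0 add0n Wstep //; case: ifP => Hx0; rewrite !Wn0; rewrite /inT; lia.
have -> : ((N-1)*q.+1 + 1 = ((N-1)*q + (N-1)).+1)%N by rewrite mulnS; lia.
have IH := IHq (ltac:(lia)) (N-1) (ltac:(lia)).
rewrite Wstep //; case: ifP => Hx0; rewrite !IH; rewrite /inT; lia.
Qed.

Lemma Wlast k (u v : 'I_N) : W k.+1 u v = [exists w, W k u w && mu1 w v].
Proof.
elim: k u => [|k IH] u.
  apply/existsP/existsP => [[w /andP[H /eqP <-]]|[w /andP[/eqP <- H]]].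
    by exists u; apply/andP; split => //=.
  by exists v; apply/andP; split => //=.
rewrite [LHS]/=. apply/existsP/existsP.
- move=> [w /andP[H1 H2]]; have : W k.+1 w v := H2; rewrite IH => /existsP [w' /andP[H3 H4]].
  exists w'; rewrite H4 andbT /=; apply/existsP; exists w; by rewrite H1.
- move=> [w' /andP[H1 H2]]; move/existsP: H1 => [w /andP[H3 H4]].
  exists w; apply/andP; split => //; change (W k.+1 w v); rewrite IH; apply/existsP; exists w'; apply/andP; split => //.
Qed.

Lemma Wback k (u v : 'I_N) : v < n' -> W k.+1 u v = W k u (inord v.+1).
Proof.
move=> Hv; rewrite Wlast; apply/existsP/idP.
- move=> [w /andP[H1 H2]]; rewrite mu1E in H2.
  have -> : inord v.+1 = w by apply/val_inj; move: H2; case: w {H1} => w Hw /=; rewrite inordK; lia.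
  done.
- move=> H; exists (inord v.+1); rewrite H mu1E inordK; lia.
Qed.

Lemma Wback_last k (u : 'I_N) : W k.+1 u (inord n'.+1) = W k u (inord 0).
Proof.
rewrite Wlast; apply/existsP/idP.
- move=> [w /andP[H1 H2]]; rewrite mu1E inordK // in H2.
  have -> : inord 0 = w by apply/val_inj; move: H2; case: w {H1} => w Hw /=; rewrite inordK; lia.
  done.
- move=> H; exists (inord 0); rewrite H mu1E !inordK //; lia.
Qed.

Lemma Wchain t d (u j : 'I_N) : j + d = n' -> W (t + d) u j = W t u jn2.
Proof.
elim: d j => [|d IH] j Hj.
  rewrite addn0; congr (W _ _ _); apply/val_inj; rewrite /= inordK; lia.
rewrite addnS Wback; last lia.
apply: IH; rewrite inordK; lia.
Qed.

End Comb.
Local Open Scope ring_scope.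
Section Tens.
Variables (R : realDomainType) (n m' : nat).
Local Notation m := m'.+2.
Local Notation P k := (majmx ((m.-1) ^ k).+1 (tpow m (@A0 R n m) k)).

Lemma A0_nseq (i w : 'I_n) : @A0 R n m (i :: nseq m.-1 w) = (mu1 i w)%:R.
Proof.
rewrite /A0 /= size_nseq eqxx /=.
have -> : all (fun x => x == w) (nseq m' w) by apply/allP => x /nseqP [->].
by [].
Qed.

Lemma P1 i j : P 1 i j = (mu1 i j)%:R.
Proof. rewrite /majmx expn1; exact: A0_nseq. Qed.

Lemma PS k i j : P k.+2 i j =
  \sum_(t : (m.-1).-tuple 'I_n) @A0 R n m (i :: (t : seq 'I_n)) *
     \prod_(l < m.-1) P k.+1 (tnth t l) j.
Proof.
rewrite /majmx /=; apply: eq_bigr => t _; congr (_ * _).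
apply: eq_bigr => l _; rewrite drop_nseq take_nseq //.
rewrite (expnS _ k.+1) -mulnBl leq_pmull // subn_gt0; exact: ltn_ord.
Qed.

Lemma P_spec k : (1 <= k)%N -> forall i j, 0 <= P k i j /\ (0 < P k i j) = W k i j.
Proof.
elim: k => [//|[|k] IH] _ i j.
  rewrite P1 /=; split; first by case: (mu1 i j).
  have -> : [exists w, mu1 i w && (w == j)] = mu1 i j.
    apply/existsP/idP => [[w /andP[? /eqP <-]]//|H]; by exists j; rewrite H eqxx.
  by case: (mu1 i j); rewrite ?ltr01 ?ltxx.
have {}IH := IH isT.
have A0ge0 : forall s, 0 <= @A0 R n m s.
  by case=> [|a [|b s]] //=; case: ifP => // _; case: (mu1 _ _).
have tge0 : forall t : (m.-1).-tuple 'I_n, 0 <= @A0 R n m (i :: (t : seq 'I_n)) *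
     \prod_(l < m.-1) P k.+1 (tnth t l) j.
  move=> t; apply: mulr_ge0 => //; apply: prodr_ge0 => l _; exact: (IH _ _).1.
rewrite PS; split; first by apply: sumr_ge0.
apply/idP/idP.
- move=> Hs.
  have [t /andP[_ Ht]] : exists t : (m.-1).-tuple 'I_n, true && (0 < @A0 R n m (i :: (t : seq 'I_n)) *
     \prod_(l < m.-1) P k.+1 (tnth t l) j).
    apply: psumr_neq0P; [move=> t _; exact: tge0| by move=> H; rewrite H ltxx in Hs].
  have HA : @A0 R n m (i :: (t : seq 'I_n)) != 0.
    by apply: contraTneq Ht => ->; rewrite mul0r ltxx.
  have Hp : \prod_(l < m.-1) P k.+1 (tnth t l) j != 0.
    by apply: contraTneq Ht => ->; rewrite mulr0 ltxx.
  have := Hp; move/prodf_neq0 => /(_ ord0 isT) H0.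
  change (W k.+2 i j) with [exists w, mu1 i w && W k.+1 w j].
  apply/existsP; exists (tnth t ord0); apply/andP; split; last first.
    by rewrite -(IH _ _).2 lt_def H0 (IH _ _).1.
  move: HA; clear Ht H0 Hp; case: t => [[|w rest] Hs'] //=.
  by case: ifP; case: (mu1 i w); rewrite //= eqxx.
- change (W k.+2 i j) with [exists w, mu1 i w && W k.+1 w j].
  move=> /existsP [w /andP[Hmu HW]].
  rewrite -(IH _ _).2 in HW.
  rewrite (bigD1 [tuple of nseq m.-1 w]) //; apply: ltr_pwDl; last first.
    by apply: sumr_ge0 => t _; exact: tge0.
  have -> : @A0 R n m (i :: ([tuple of nseq m.-1 w] : seq _)) = (mu1 i w)%:R by exact: A0_nseq.
  rewrite Hmu mul1r; apply: prodr_gt0 => l _; by rewrite tnth_nseq.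
Qed.

End Tens.
Lemma modpos_val N r d : (1 <= r)%N -> (r < N)%N -> (d < N)%N ->
  modpos N (r%:Z - d%:Z) = (if (d < r)%N then r - d - 1 else r + N - d - 1)%N.+1.
Proof.
move=> H1 H2 H3; rewrite /modpos; congr _.+1; case: ifP => H.
  have -> : (r%:Z - d%:Z - 1 = (r - d - 1)%N%:Z) by lia.
  rewrite modz_nat absz_nat modn_small //; lia.
have -> : (r%:Z - d%:Z - 1 = (r + N - d - 1)%N%:Z - N%:Z) by lia.
rewrite -(modzDr ((r + N - d - 1)%N%:Z - N%:Z) N%:Z) subrK modz_nat absz_nat modn_small //; lia.
Qed.

Theorem proposition2p14 (R : realDomainType) (n m : nat) :
  (2 <= n)%N -> (2 <= m)%N ->
  (* (i) *)
  (forall (q r : nat) (jn1 : 'I_n),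
     jn1.+1 = n.-1 ->
     (1 <= r <= n.-1)%N ->
     (1 <= (n.-1) * q + r <= (n.-1) * (n - 2))%N ->
     Sk m (@A0 R n m) ((n.-1) * q + r) jn1 =
       [set u : 'I_n | [exists d : 'I_(q.+2), u.+1 == modpos n (r%:Z - (d : nat)%:Z)]]
     /\ #|Sk m (@A0 R n m) ((n.-1) * q + r) jn1| = q.+2)
  /\
  (* (ii) *)
  (forall (t : nat) (jn1 jn : 'I_n),
     (0 < t)%N -> jn1.+1 = n.-1 -> jn.+1 = n ->
     (forall j : 'I_n, (1 <= j.+1 <= n - 2)%N ->
        Sk m (@A0 R n m) (t + (n.-1 - j.+1)) j = Sk m (@A0 R n m) t jn1)
     /\ Sk m (@A0 R n m) (t + n.-1) jn = Sk m (@A0 R n m) t jn1).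
Proof.
move=> Hn Hm.
case: n Hn => [|[|n']] // _; case: m Hm => [|[|m']] // _.
have SkW : forall k (j : 'I_n'.+2), (0 < k)%N ->
    Sk m'.+2 (@A0 R n'.+2 m'.+2) k j = [set u | W k u j].
  move=> [|k] // j _; apply/setP => u; rewrite !inE; exact: (@P_spec R n'.+2 m' k.+1 isT u j).2.
have Ejn : forall jn1 : 'I_n'.+2, jn1.+1 = n'.+1 -> jn1 = jn2 n'.
  move=> jn1 H; apply/val_inj; rewrite /= inordK; lia.
split.
- move=> q r jn1 Hj /andP[Hr1 Hr2] /andP[Hk1 Hk2].
  rewrite (Ejn _ Hj) {Hj jn1}.
  have Hq : (q + 2 < n'.+2)%N.
    rewrite /= in Hr2 Hk2.
    case: (ltnP q n') => Hqn; first lia.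
    have : (n'.+1 * n' <= n'.+1 * q)%N by rewrite leq_mul2l Hqn orbT.
    have E2 : (n'.+2 - 2 = n')%N by lia.
    rewrite ?E2 in Hk2; lia.
  rewrite SkW; last lia.
  set g : 'I_q.+2 -> 'I_n'.+2 := fun d =>
    inord (if (d < r)%N then r - d - 1 else r + n'.+2 - d - 1)%N.
  have ET : [set u : 'I_n'.+2 | W ((n'.+2).-1 * q + r) u (jn2 n')] =
            [set u : 'I_n'.+2 | [exists d : 'I_(q.+2), u.+1 == modpos n'.+2 (r%:Z - (d : nat)%:Z)]].
    apply/setP => u; rewrite !inE.
    have := @claim n' q Hq r (ltac:(lia)) u (ltn_ord u).
    rewrite /Wn inord_val subn1 /= => ->.
    have Hu := ltn_ord u.
    apply/idP/existsP.
    + move=> H.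
      have Hd : ((if (u < r)%N then r - u - 1 else r + n'.+2 - u - 1) < q.+2)%N.
        by move: H; rewrite /inT; case: ifP; lia.
      exists (Ordinal Hd); rewrite /= modpos_val; [|lia|lia|by move: Hd; case: ifP; lia].
      by move: H Hd; rewrite /inT; case: ifP => /= ?; case: ifP => ?; lia.
    + move=> [d /eqP]; have Hd := ltn_ord d; rewrite modpos_val; [|lia|lia|lia].
      by rewrite /inT; case: ifP => ?; lia.
  have Eg : [set u : 'I_n'.+2 | [exists d : 'I_(q.+2), u.+1 == modpos n'.+2 (r%:Z - (d : nat)%:Z)]]
          = g @: setT.
    apply/setP => u; rewrite inE; apply/existsP/imsetP.
    + move=> [d /eqP]; have Hd := ltn_ord d; rewrite modpos_val; [|lia|lia|lia].
      move=> H; exists d; first by rewrite inE.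
      have Hu := ltn_ord u; apply/val_inj; rewrite /g /= inordK; case: ifP H => ? H; lia.
    + move=> [d _ ->]; exists d; have Hd := ltn_ord d; rewrite modpos_val; [|lia|lia|lia].
      rewrite /g inordK; case: ifP => ?; lia.
  split; first exact: ET.
  rewrite ET Eg card_imset ?cardsT ?card_ord //.
  move=> d1 d2 /(f_equal val); have H1 := ltn_ord d1; have H2 := ltn_ord d2.
  rewrite /g /= !inordK; [|case: ifP => ?; lia|case: ifP => ?; lia].
  move=> H; apply/val_inj; move: H => /=; case: ifP => ?; case: ifP => ?; lia.
- move=> t jn1 jn Ht Hj1 Hjn; rewrite (Ejn _ Hj1) {Hj1 jn1}; split.
  + move=> j Hj; rewrite !SkW; [|lia|lia].
    apply/setP => u; rewrite !inE; apply: Wchain; rewrite /= in Hj *; lia.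
  + rewrite !SkW; [|lia|lia].
    have -> : jn = inord n'.+1 by apply/val_inj; rewrite /= inordK; lia.
    apply/setP => u; rewrite !inE /= addnS Wback_last; apply: Wchain.
    by rewrite inordK.
Qed.
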